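(* (1) If $n,m\in\mathbf N$ with $1\le m\le n$, then $$\left\langle{n\atop m}\right\rangle=\sum_{j=1}^{n-m}j\left\langle{n-j-1\atop m-1}\right\rangle^{(j+1,1)} .$$ (2) If $n,m,\nu\in\mathbf N_0$ with $0\le m\le n$ and $1\le\nu\le n-1$, then $$\left\langle{n\atop m}\right\rangle=\sum_{k=0}^{\nu}\left\langle{\nu\atop k}\right\rangle\left\langle{n-\nu\atop m-k}\right\rangle^{(\nu,k)} .$$
   Context: Euler numbers: $\left\langle{0\atop 0}\right\rangle=1$, $\left\langle{n\atop k}\right\rangle=0$ for $k<0$ or $k>n$, $\left\langle{n\atop k}\right\rangle=(n-k)\left\langle{n-1\atop k-1}\right\rangle+(k+1)\left\langle{n-1\atop k}\right\rangle$. For sequences $a=(a_j)_{j\ge1}$, $b=(b_j)_{j\ge0}$ and $\omega=(\varepsilon_1,\dots,\varepsilon_N)\in\{0,1\}^N$ let $w^{a,b}_N(\omega)=\prod_{t=1}^N g_t$ where, with $j=\#\{l<t:\varepsilon_l=0\}$, $g_t=a_{t-j}$ if $\varepsilon_t=0$ and $g_t=b_j$ if $\varepsilon_t=1$; let $\zeta_{Nk}(a,b)=\sum w^{a,b}_N(\omega)$ over $\omega$ with exactly $k$ zeros ($N\ge1$, $0\le k\le N$), $\zeta_{00}=1$, $\zeta_{Nk}=0$ if $k<0$ or $k>N$. For integers $0\le\mu\le\nu$, the associated Euler numbers of rank $(\nu,\mu)$ are $\left\langle{N\atop k}\right\rangle^{(\nu,\mu)}=\zeta_{Nk}(a,b)$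 with $a_j=\nu-\mu+j-1$ $(j\ge1)$ and $b_j=\mu+j+1$ $(j\ge0)$. *)

(* Defs.v *)
From mathcomp Require Import all_boot all_algebra.
Set Implicit Arguments. Unset Strict Implicit. Unset Printing Implicit Defensive.

(* Euler numbers <n k> (Eulerian numbers), k : nat.  The recurrence with
   truncated subtraction automatically gives 0 for k > n; <n -1> = 0 is
   encoded by the k = 0 case. *)
Fixpoint euler (n k : nat) : nat :=
  match n with
  | 0 => (k == 0)
  | n'.+1 =>
      (match k with 0 => 0 | k'.+1 => (n - k) * euler n' k' end)
      + k.+1 * euler n' k
  end.

(* Weight w^{a,b}_N(omega) of a 0/1 word omega, encoded as a bool sequence
   with epsilon_t = 1 <-> true.  Position t (0-indexed here, t+1 in the
   paper); j = number of zeros strictly before; g = a_{(t+1)-j} if the letter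
   is 0, and b_j if it is 1.  The sequence a is indexed from 1 (a 0 unused). *)
Definition weight (a b : nat -> nat) (w : seq bool) : nat :=
  \prod_(t < size w)
     (let j := count negb (take t w) in
      if nth true w t then b j else a (t.+1 - j)).

Definition zeta (a b : nat -> nat) (N k : nat) : nat :=
  \sum_(w : N.-tuple bool | count negb w == k) weight a b w.

Definition assoc_euler (nu mu N k : nat) : nat :=
  zeta (fun j => nu - mu + j - 1) (fun j => mu + j + 1) N k.

Definition assoc_eulerZ (nu mu N : nat) (k : int) : nat :=
  match k with Posz k' => assoc_euler nu mu N k' | Negz _ => 0 end.

(* Main.v *)
Require Import Defs.
From mathcomp Require Import all_boot all_algebra.
From mathcomp Require Import zify.

Lemma tuple_sum N (F : seq bool -> nat) (P : seq bool -> bool) :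
  \sum_(w : N.+1.-tuple bool | P w) F w =
  \sum_(x : bool) \sum_(w : N.-tuple bool | P (x :: w)) F (x :: w).
Proof.
rewrite pair_big_dep /=.
rewrite (reindex (fun w : N.+1.-tuple bool => (thead w, [tuple of behead w]))) /=.
  apply: eq_big => [w|w _]; case/tupleP: w => x t //=.
exists (fun p : bool * N.-tuple bool => cons_tuple p.1 p.2).
  by move=> w _; case/tupleP: w => x t; apply: val_inj.
by move=> [x t] _ /=; congr pair; apply: val_inj.
Qed.

Lemma weight_cons a b x w :
  weight a b (x :: w) =
  if x then b 0 * weight (fun i => a i.+1) b w
  else a 1 * weight a (fun i => b i.+1) w.
Proof.
rewrite /weight /= big_ord_recl /=.
have hc : forall t : 'I_(size w), count negb (take t w) <= t.
  move=> t; apply: leq_trans (count_size _ _) _; by rewrite size_take ltn_ord.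
case: x => /=; congr (_ * _); apply: eq_bigr => t _ /=; rewrite /bump /= !add0n add1n.
by rewrite subSn //; apply: leq_trans (hc t) _.
Qed.

Fixpoint Z (a b : nat -> nat) (N K : nat) {struct N} : nat :=
  match N with
  | 0 => (K == 0 : nat)
  | N'.+1 => b 0 * Z (fun i => a i.+1) b N' K +
      match K with 0 => 0 | K'.+1 => a 1 * Z a (fun i => b i.+1) N' K' end
  end.

Lemma zetaZ N : forall a b K, zeta a b N K = Z a b N K.
Proof.
elim: N => [|N IH] a b K.
  rewrite /zeta /=.
  rewrite (eq_bigl (fun _ => K == 0)); last by move=> w; rewrite (tuple0 w).
  rewrite (eq_bigr (fun _ => 1)); last by move=> w _; rewrite (tuple0 w) /weight big_ord0.
  case: eqP => _; last by rewrite big_pred0.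
  by rewrite sum_nat_const card_tuple card_bool expn0.
rewrite /zeta (tuple_sum _ (weight a b) (fun s => count negb s == K)) big_bool /=.
congr (_ + _).
  rewrite -IH /zeta big_distrr /=; apply: eq_big => w; first by rewrite add0n.
  by move=> _; rewrite weight_cons.
case: K => [|K].
  by rewrite big_pred0 // => w; rewrite add1n.
rewrite -IH /zeta big_distrr /=; apply: eq_big => w; first by rewrite add1n eqSS.
by move=> _; rewrite weight_cons.
Qed.

From mathcomp Require Import ring.

Lemma Z_ext N : forall a a' b b' K, a =1 a' -> b =1 b' -> Z a b N K = Z a' b' N K.
Proof.
elim: N => [|N IH] a a' b b' K ea eb //=.
rewrite eb (IH _ (fun i => a' i.+1) _ b'); [|by move=> i; rewrite ea|by []].
case: K => [|K] //; rewrite ea (IH a a' (fun i => b i.+1) (fun i => b' i.+1)) //.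
Qed.

Lemma Z_vanish N : forall a b K, N < K -> Z a b N K = 0.
Proof.
elim: N => [|N IH] a b [|K] //= h.
by rewrite !IH // ?muln0 // ltnW.
Qed.

Lemma Z_S a b N K : Z a b N.+1 K = b 0 * Z (fun i => a i.+1) b N K +
      match K with 0 => 0 | K'.+1 => a 1 * Z a (fun i => b i.+1) N K' end.
Proof. by []. Qed.

Lemma Z_last N : forall a b K, Z a b N.+1 K =
  b K * Z a b N K + match K with 0 => 0 | K'.+1 => a (N.+1 - K') * Z a b N K' end.
Proof.
elim: N => [|N IH] a b K.
  by case: K => [|[|K]] /=; rewrite ?muln0 ?muln1 ?addn0 ?add0n.
rewrite (Z_S a b N.+1 K) (Z_S a b N K) (IH (fun i => a i.+1) b K).
case: K => [|K]; first by [].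
rewrite (IH a (fun i => b i.+1) K) (Z_S a b N K).
case: (leqP K N.+1) => hK.
  have -> : (N.+1 - K).+1 = N.+2 - K by rewrite [RHS]subSn.
  case: K hK => [|K] hK; first by rewrite !subn0; ring.
  rewrite [N.+2 - K.+1]subSS; ring.
case: K hK => [|K] hK //.
by rewrite !(@Z_vanish N _ _ K.+1) ?(@Z_vanish N _ _ K) ?(@Z_vanish N _ _ K.+2) ?muln0 // ltnW // ltnW.
Qed.

Definition PA nu mu N K := Z (fun j => nu - mu + j - 1) (fun j => mu + j + 1) N K.

Lemma assocP nu mu N K : assoc_euler nu mu N K = PA nu mu N K.
Proof. by rewrite /assoc_euler zetaZ. Qed.

Lemma P_vanish nu mu N K : N < K -> PA nu mu N K = 0.
Proof. exact: Z_vanish. Qed.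

Lemma P_first nu mu N K : mu <= nu -> PA nu mu N.+1 K =
  (mu + 1) * PA nu.+1 mu N K +
  match K with 0 => 0 | K'.+1 => (nu - mu) * PA nu.+1 mu.+1 N K' end.
Proof.
move=> h; rewrite /PA Z_S addn0; congr (_ * _ + _).
  by apply: Z_ext => i; lia.
case: K => [|K] //; rewrite addnK; congr (_ * _).
by apply: Z_ext => i; lia.
Qed.

Lemma P_last nu mu N K : PA nu mu N.+1 K =
  (mu + K + 1) * PA nu mu N K +
  match K with 0 => 0 | K'.+1 => (nu - mu + (N.+1 - K') - 1) * PA nu mu N K' end.
Proof. by rewrite /PA Z_last. Qed.

Lemma euler_vanish n k : n < k -> euler n k = 0.
Proof.
elim: n k => [|n IH] [|k] //= h.
by rewrite !IH ?muln0 // ltnW.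
Qed.

Definition T nu N m k := if k <= m then PA nu k N (m - k) else 0.

Lemma T_step nu N m k : k <= nu -> T nu N.+1 m k =
  (m + 1) * T nu N m k + match m with 0 => 0 | m'.+1 => (nu + N.+1 - m'.+1) * T nu N m' k end.
Proof.
move=> hk; rewrite /T.
case: (leqP k m) => hkm; last first.
  case: m hkm => [|m] hkm; rewrite ?muln0 //.
  by case: ifP => [h|_]; [lia | rewrite muln0].
rewrite P_last.
have -> : k + (m - k) + 1 = m + 1 by lia.
case: m hkm => [|m] hkm.
  by rewrite sub0n.
case E: (m.+1 - k) => [|K].
  rewrite (_ : (k <= m) = false) ?muln0 //.
  apply/negbTE; rewrite -ltnNge; lia.
rewrite (_ : (k <= m) = true); last by apply/idP; lia.
rewrite (_ : m - k = K); last by lia.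
case: (leqP K N) => hK.
  by congr (_ + _ * _); lia.
by rewrite (@P_vanish _ _ N K) // !muln0.
Qed.

Lemma euler_S n m : euler n.+1 m =
  match m with 0 => 0 | m'.+1 => (n.+1 - m'.+1) * euler n m' end + m.+1 * euler n m.
Proof. by case: m. Qed.

Lemma D nu N m : \sum_(0 <= k < nu.+1) euler nu k * T nu N m k = euler (nu + N) m.
Proof.
elim: N m => [|N IH] m.
  have hT : forall k, T nu 0 m k = (k == m) by move=> k; rewrite /T /PA /=; case: (ltngtP k m) => h; lia.
  rewrite addn0 big_mkord.
  under eq_bigr do rewrite hT.
  case: (leqP m nu) => hm.
    rewrite (bigD1 (Ordinal (hm : m < nu.+1))) //= eqxx muln1 big1 ?addn0 //.
    move=> i /eqP hi; rewrite eq_sym; case: eqP => [e|]; last by rewrite muln0.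
    by exfalso; apply: hi; apply: val_inj.
  rewrite euler_vanish // big1 // => i _.
  by case: eqP => [e|]; [move: (ltn_ord i); lia | rewrite muln0].
rewrite addnS euler_S.
rewrite (eq_big_nat _ _ (F2 := fun k => (m + 1) * (euler nu k * T nu N m k) +
   match m with 0 => 0 | m'.+1 => (nu + N.+1 - m'.+1) * (euler nu k * T nu N m' k) end)); last first.
  move=> k hk; rewrite T_step; last by lia.
  by case: m => [|m]; ring.
rewrite big_split /= -big_distrr /= IH.
case: m => [|m].
  by rewrite big1 // addn0 add0n.
by rewrite -big_distrr /= IH (addnS nu N) addn1 addnC.
Qed.

Lemma G M N : forall j, PA j 0 N M.+1 = \sum_(0 <= i < N) (j + i) * PA (j + i).+1 1 (N - i - 1) M.
Proof.
elim: N => [|N IH] j.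
  by rewrite big_geq.
rewrite P_first // IH big_nat_recl // addnC; congr (_ + _).
  by rewrite subn0 addn0 subn1.
rewrite add0n mul1n; apply: eq_bigr => i _.
by rewrite addSn addnS subSS.
Qed.

Import GRing.Theory Num.Theory.

Theorem theorem6p4 :
  (forall n m : nat, 1 <= m <= n ->
     euler n m = \sum_(1 <= j < (n - m).+1) j * assoc_euler j.+1 1 (n - j - 1) (m - 1))
  /\
  (forall n m nu : nat, m <= n -> 1 <= nu <= n - 1 ->
     euler n m = \sum_(0 <= k < nu.+1)
                   euler nu k * assoc_eulerZ nu k (n - nu) (m%:Z - k%:Z)%R).
Proof.
split.
  move=> n m /andP[h1 h2].
  have e0 : euler n m = PA 0 0 n m.
    by have := D 0 n m; rewrite big_nat1 /T /= subn0 add0n mul1n.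
  case: n h2 e0 => [|n] h2 e0; first by move: h1 h2; lia.
  case: m h1 h2 e0 => [|M] // _ h2 e0.
  rewrite e0 P_first // add0n mul1n G.
  rewrite big_add1 /= subSS.
  rewrite (@big_cat_nat _ _ _ (n - M) 0 n) //=; last by rewrite leq_subr.
  rewrite subnn mul0n addn0 [X in _ + X = _]big_nat_cond [X in _ + X = _]big1 ?addn0; last first.
    move=> i /andP[/andP[hi1 hi2] _]; rewrite P_vanish ?muln0 //; lia.
  apply: eq_big_nat => i hi.
  by rewrite add1n assocP subSS !subn1.
move=> n m nu hm hnu.
have hn : n = nu + (n - nu) by lia.
rewrite {1}hn -(D nu (n - nu) m).
apply: eq_big_nat => k hk; congr (_ * _).
rewrite /T; case: leqP => h.
  by rewrite subzn //= assocP.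
have : (m%:Z - k%:Z < 0)%R by rewrite subr_lt0 ltz_nat.
by case: (m%:Z - k%:Z)%R.
Qed.
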